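(* Let $p\ge 1$, $N\ge 1$, let $x_1,\dots,x_N\in\mathbb{R}^p$ be arbitrary, and let $w_1,\dots,w_N>0$ be fixed weights. Let $f:\mathbb{R}^p\to[0,1]$ be PDD. Define the blurring mean-shift iteration by $x_i^{(0)}=x_i$ and $$x_i^{(t+1)}=\frac{\sum_{j=1}^N f(x_i^{(t)}-x_j^{(t)})\,w_j\,x_j^{(t)}}{\sum_{j=1}^N f(x_i^{(t)}-x_j^{(t)})\,w_j},\qquad i=1,\dots,N,\ t\ge 0.$$ Then there exist points $x_1^*,\dots,x_N^*\in\mathbb{R}^p$ such that $\lim_{t\to\infty}x_i^{(t)}=x_i^*$ for every $i=1,\dots,N$.
   Context: A function $f:\mathbb{R}^p\to[0,1]$ is called PDD (positive and decreasing with respect to distance) if: (i) $0\le f(u)\le 1$ for all $u$, and $f(u)=1$ if and only if $u=0$; (ii) $f(u)$ depends only on $\|u\|$, i.e. $f(u)=\varphi(\|u\|)$ for some function $\varphi:[0,\infty)\to[0,1]$; (iii) $\varphi$ is decreasing (non-increasing) in $\|u\|$. The denominators in the iteration are positive since $f(0)=1$ and $w_i>0$. *)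

(* Defs.v *)
From Stdlib Require Import Reals.
Open Scope R_scope.

(* A point of R^p is represented as a function nat -> R; only the
   coordinates 0..p-1 are meaningful. *)
Definition vec := nat -> R.

Fixpoint sumN (n : nat) (g : nat -> R) : R :=
  match n with
  | O => 0
  | S m => sumN m g + g m
  end.

Definition vsub (u v : vec) : vec := fun k => u k - v k.

Definition norm (p : nat) (u : vec) : R := sqrt (sumN p (fun k => u k ^ 2)).

Definition is_zero (p : nat) (u : vec) : Prop := forall k, (k < p)%nat -> u k = 0.

Definition PDD (p : nat) (f : vec -> R) : Prop :=
  (forall u, 0 <= f u <= 1) /\
  (forall u, f u = 1 <-> is_zero p u) /\
  exists phi : R -> R,
    (forall u, f u = phi (norm p u)) /\
    (forall a b, 0 <= a -> a <= b -> phi b <= phi a).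

Definition bms_step (N : nat) (f : vec -> R) (w : nat -> R) (X : nat -> vec)
  : nat -> vec :=
  fun i k =>
    sumN N (fun j => f (vsub (X i) (X j)) * w j * X j k) /
    sumN N (fun j => f (vsub (X i) (X j)) * w j).

Fixpoint bms (N : nat) (f : vec -> R) (w : nat -> R) (x : nat -> vec) (t : nat)
  : nat -> vec :=
  match t with
  | O => x
  | S t' => bms_step N f w (bms N f w x t')
  end.

(* Main.v *)
Require Import Defs.
From Stdlib Require Import Reals Lra Lia Psatz ClassicalEpsilon.
Open Scope R_scope.

Lemma sumN_ext n g h : (forall k, (k < n)%nat -> g k = h k) -> sumN n g = sumN n h.
Proof.
  induction n as [|n IH]; intros H; simpl; [reflexivity|].
  rewrite IH by (intros; apply H; lia). rewrite H by lia. reflexivity.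
Qed.

Lemma sumN_ge0 n g : (forall k, (k < n)%nat -> 0 <= g k) -> 0 <= sumN n g.
Proof.
  induction n as [|n IH]; intros H; simpl; [lra|].
  assert (0 <= sumN n g) by (apply IH; intros; apply H; lia).
  assert (0 <= g n) by (apply H; lia). lra.
Qed.

Lemma sumN_lt n g e : (1 <= n)%nat -> (forall k, (k < n)%nat -> g k < e) -> sumN n g < INR n * e.
Proof.
  induction n as [|n IH]; intros Hn H; [lia|].
  simpl sumN. rewrite S_INR.
  destruct n as [|n].
  - simpl. assert (g 0%nat < e) by (apply H; lia). lra.
  - assert (sumN (S n) g < INR (S n) * e) by (apply IH; [lia| intros; apply H; lia]).
    assert (g (S n) < e) by (apply H; lia). lra.
Qed.

Lemma bv_conv (u : nat -> R) (B : R) :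
  (forall T, sumN T (fun t => Rabs (u (S t) - u t)) <= B) -> exists l, Un_cv u l.
Proof.
  intros HB.
  set (S := fun T => sumN T (fun t => Rabs (u (Datatypes.S t) - u t))).
  assert (Sg : Un_growing S).
  { intro n. unfold S. simpl. pose proof (Rabs_pos (u (Datatypes.S n) - u n)). lra. }
  assert (Sb : has_ub S).
  { exists B. intros x [i ->]. apply HB. }
  assert (diff : forall p d, Rabs (u (p + d)%nat - u p) <= S (p + d)%nat - S p).
  { intros p d. induction d as [|d IH].
    - rewrite Nat.add_0_r. rewrite Rminus_diag, Rabs_R0. lra.
    - replace (p + Datatypes.S d)%nat with (Datatypes.S (p + d)) by lia.
      unfold S at 1. simpl sumN. fold (S (p + d)%nat).
      pose proof (Rabs_triang (u (Datatypes.S (p + d)) - u (p + d)%nat) (u (p + d)%nat - u p)).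
      replace (u (Datatypes.S (p + d)) - u (p + d)%nat + (u (p + d)%nat - u p))
        with (u (Datatypes.S (p + d)) - u p) in H by ring.
      lra. }
  assert (CS : Cauchy_crit S) by (apply CV_Cauchy; apply growing_cv; assumption).
  assert (Cu : Cauchy_crit u).
  { intros eps Heps. destruct (CS eps Heps) as [N0 HN]. exists N0.
    intros n m Hn Hm. pose proof (HN n m Hn Hm) as H. unfold Rdist in *.
    destruct (Nat.le_ge_cases n m) as [nm|mn].
    - replace m with (n + (m - n))%nat by lia.
      replace m with (n + (m - n))%nat in H by lia.
      pose proof (diff n (m - n)%nat).
      rewrite Rabs_minus_sym. 
      pose proof (Rle_abs (S (n + (m - n))%nat - S n)). rewrite Rabs_minus_sym in H. lra.
    - replace n with (m + (n - m))%nat by lia.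
      replace n with (m + (n - m))%nat in H by lia.
      pose proof (diff m (n - m)%nat).
      pose proof (Rle_abs (S (m + (n - m))%nat - S m)). lra. }
  destruct (R_complete u Cu) as [l Hl]. exists l. exact Hl.
Qed.

Lemma unif_T (P : nat -> nat -> Prop) (p : nat) :
  (forall k, (k < p)%nat -> exists T, forall t, (T <= t)%nat -> P k t) ->
  exists T, forall t, (T <= t)%nat -> forall k, (k < p)%nat -> P k t.
Proof.
  induction p as [|p IH]; intros H.
  - exists 0%nat. intros. lia.
  - destruct IH as [T1 H1]. { intros k Hk. apply H. lia. }
    destruct (H p ltac:(lia)) as [T2 H2].
    exists (Nat.max T1 T2). intros t Ht k Hk.
    destruct (Nat.eq_dec k p) as [->|ne].
    + apply H2. lia.
    + apply H1; lia.
Qed.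

Lemma final_from_coord (p N : nat) (X : nat -> nat -> vec) : (1 <= p)%nat ->
  (forall i k, (i < N)%nat -> exists l, Un_cv (fun t => X t i k) l) ->
  exists xstar : nat -> vec, forall i, (i < N)%nat -> forall eps, 0 < eps ->
    exists T : nat, forall t, (T <= t)%nat -> norm p (vsub (X t i) (xstar i)) < eps.
Proof.
  intros Hp H.
  assert (H' : forall i k, exists l, (i < N)%nat -> Un_cv (fun t => X t i k) l).
  { intros i k. destruct (Compare_dec.lt_dec i N) as [lt|nlt].
    - destruct (H i k lt) as [l Hl]. exists l. intros; exact Hl.
    - exists 0. intros; contradiction. }
  exists (fun i k => proj1_sig (constructive_indefinite_description _ (H' i k))).
  intros i Hi eps Heps.
  set (xs := fun k => proj1_sig (constructive_indefinite_description _ (H' i k))).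
  assert (Hxs : forall k, Un_cv (fun t => X t i k) (xs k)).
  { intro k. unfold xs. destruct (constructive_indefinite_description _ (H' i k)) as [l Hl]. simpl. exact (Hl Hi). }
  assert (Hp' : 1 <= INR p) by (apply (le_INR 1); lia).
  set (dl := eps / INR p).
  assert (dl0 : 0 < dl) by (unfold dl; apply Rdiv_lt_0_compat; lra).
  assert (dle : dl * INR p = eps) by (unfold dl; field; lra).
  destruct (unif_T (fun k t => Rabs (X t i k - xs k) < dl) p) as [T HT].
  { intros k _. destruct (Hxs k dl (Rlt_gt _ _ dl0)) as [T HT]. exists T. intros t Ht. apply HT. lia. }
  exists T. intros t Ht. unfold norm.
  rewrite <- (sqrt_pow2 eps) by lra.
  apply sqrt_lt_1_alt. split.
  - apply sumN_ge0. intros. apply pow2_ge_0.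
  - apply Rlt_le_trans with (INR p * (dl * dl)).
    + apply sumN_lt; [exact Hp|]. intros k Hk. pose proof (HT t Ht k Hk) as Hk'.
      unfold vsub. 
      assert (Hab : 0 <= Rabs (X t i k - xs k)) by apply Rabs_pos.
      rewrite <- (pow2_abs (X t i k - xs k)). nra.
    + assert (dl * dl * INR p <= dl * INR p * (dl * INR p)) by nra.
      simpl. nra.
Qed.

Lemma PDD_facts p f : PDD p f ->
  (forall u, 0 <= f u <= 1) /\ (forall a, f (vsub a a) = 1) /\
  (forall a b, f (vsub a b) = f (vsub b a)).
Proof.
  intros [H01 [H1 [phi [Hphi _]]]]. split; [exact H01|split].
  - intro a. apply H1. intros k _. unfold vsub. ring.
  - intros a b. rewrite !Hphi. f_equal. unfold norm. f_equal.
    apply sumN_ext. intros k _. unfold vsub. ring.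
Qed.

Lemma weights_lo (N : nat) (w : nat -> R) :
  (forall i, (i < N)%nat -> 0 < w i) -> exists lo, 0 < lo /\ forall i, (i < N)%nat -> lo <= w i.
Proof.
  induction N as [|N IH]; intros H.
  - exists 1. split; [lra| intros; lia].
  - destruct IH as [lo [lo0 Hlo]]. { intros; apply H; lia. }
    exists (Rmin lo (w N)). split.
    + apply Rmin_pos; [exact lo0| apply H; lia].
    + intros i Hi. destruct (Nat.eq_dec i N) as [->|ne].
      * apply Rmin_r.
      * eapply Rle_trans; [apply Rmin_l|]. apply Hlo. lia.
Qed.

From HB Require Import structures.
From mathcomp Require Import ssreflect ssrfun ssrbool eqtype ssrnat seq path choice fintype tuple finfun bigop finset fingroup perm order ssralg ssrnum.
From mathcomp Require Import ring lra zify Rstruct.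
Set Implicit Arguments. Unset Strict Implicit. Unset Printing Implicit Defensive.
Import Order.TTheory GRing.Theory Num.Theory.
Local Open Scope ring_scope.

Lemma abel (R : realFieldType) (c y : nat -> R) (n : nat) :
  \sum_(j < n.+1) c j * y j =
  (\sum_(j < n.+1) c j) * y n + \sum_(m < n) (y m - y m.+1) * \sum_(j < m.+1) c j.
Proof.
elim: n => [|n IH]; first by rewrite !big_ord1 big_ord0 addr0.
have E1 := big_ord_recr n.+1 (fun j : 'I_n.+2 => c j * y j).
have E2 := big_ord_recr n.+1 (fun j : 'I_n.+2 => c j).
have E3 := big_ord_recr n (fun m : 'I_n.+1 => (y m - y m.+1) * \sum_(j < m.+1) c j).
rewrite E1 E2 E3 /= IH.
set S := \sum_(i < n) _. set C := \sum_(i < n.+1) _.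
rewrite mulrDl mulrBl; lra.
Qed.
Lemma sum_le_n (R : realFieldType) (n : nat) (P : pred 'I_n) (F : 'I_n -> R) :
  (forall i, P i -> 0 <= F i <= 1) -> \sum_(i < n | P i) F i <= n%:R.
Proof.
move=> H. rewrite big_mkcond /=.
apply: le_trans (_ : \sum_(i < n) (1:R) <= _).
  apply: ler_sum => i _. case: ifP => Pi; last by [].
  by case/andP: (H i Pi).
by rewrite sumr_const card_ord.
Qed.

Lemma cut_lemma (R : realFieldType) (n : nat) (A : nat -> nat -> R) (c K b d : R) (M : nat) (s : {perm 'I_n}) :
 (0 < M)%N -> (M < n)%N ->
 (forall i j, (i < n)%N -> (j < n)%N -> 0 <= A i j) ->
 (forall i, (i < n)%N -> \sum_(j < n) A i j = 1) ->
 (forall i, (i < n)%N -> c <= A i i) ->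
 (forall i j, (i < n)%N -> (j < n)%N -> A i j <= K * A j i) ->
 0 <= c -> 0 <= K -> 0 < b -> b <= 1 -> b * K <= 1/2 -> n%:R * b <= c/2 ->
 0 <= d -> d * (1 + K) * n%:R <= b ^+ n.-1 * c / 2 -> d * (1+K) <= b ^+ n.-1 / 2 ->
 \sum_(k < n) b ^+ k * (\sum_(j < n | (j < M)%N) A (s k) j)
   + d * (\sum_(i < n | (i < M)%N) \sum_(j < n | (M <= j)%N) A i j
          + \sum_(i < n | (M <= i)%N) \sum_(j < n | (j < M)%N) A i j)
 <= \sum_(k < n | (k < M)%N) b ^+ k.
Proof.
move=> M0 Mn A0 A1 Ac AK c0 K0 b0 b1 bK nb d0 dn dK.
set r := fun i : nat => \sum_(j < n | (j < M)%N) A i j.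
have hr0 : forall i : 'I_n, 0 <= r i.
  by move=> i; apply: sumr_ge0 => j _; apply: A0.
have hrc : forall i : 'I_n, r i + \sum_(j < n | (M <= j)%N) A i j = 1.
  move=> i; rewrite -(A1 i (ltn_ord i)) [RHS](bigID (fun j : 'I_n => (j < M)%N)) /=.
  by congr (_ + _); apply: eq_bigl => j; rewrite -leqNgt.
have hcomp0 : forall i : 'I_n, 0 <= \sum_(j < n | (M <= j)%N) A i j.
  by move=> i; apply: sumr_ge0 => j _; apply: A0.
have hr1 : forall i : 'I_n, r i <= 1.
  by move=> i; have := hrc i; have := hcomp0 i; lra.
have hrM : forall i : 'I_n, (M <= i)%N -> r i <= 1 - c.
  move=> i Mi; have := hrc i.
  rewrite (bigD1 i) //=.
  have : 0 <= \sum_(j < n | (M <= j)%N && (j != i)) A i j.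
    by apply: sumr_ge0 => j _; apply: A0.
  have := Ac i (ltn_ord i). lra.
set out := \sum_(i < n | (i < M)%N) \sum_(j < n | (M <= j)%N) A i j.
set inn := \sum_(i < n | (M <= i)%N) \sum_(j < n | (j < M)%N) A i j.
have outE : out = \sum_(i < n | (i < M)%N) (1 - r i).
  by apply: eq_bigr => i _; have := hrc i; lra.
have innE : inn = \sum_(i < n | (M <= i)%N) r i by [].
have hout0 : 0 <= out.
  by apply: sumr_ge0 => i _; apply: hcomp0.
have hin0 : 0 <= inn by apply: sumr_ge0 => i _; apply: hr0.
have hin : inn <= K * out.
  rewrite /inn /out mulr_sumr.
  apply: le_trans (_ : \sum_(i < n | (M <= i)%N) \sum_(j < n | (j < M)%N) K * A j i <= _).
    apply: ler_sum => i _; apply: ler_sum => j _; exact: AK.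
  rewrite exchange_big /=; apply: ler_sum => j _; rewrite mulr_sumr; exact: lexx.
have houtn : out <= n%:R.
  rewrite outE; apply: sum_le_n => i _; have := hr0 i; have := hr1 i; lra.
pose e := b ^+ M.-1.
have he0 : 0 <= e by rewrite /e exprn_ge0 // ltW.
have hen : b ^+ n.-1 <= e.
  rewrite /e; apply: ler_wiXn2l; [exact: ltW | exact: b1 | ].
  by clear -M0 Mn; lia.
have heM : b ^+ M = b * e by rewrite /e -exprS prednK.
have hbk : forall k : 'I_n, (k < M)%N -> e <= b ^+ k.
  move=> k kM; rewrite /e; apply: ler_wiXn2l; [exact: ltW | exact: b1 | ].
  by rewrite -ltnS prednK.
have hbk' : forall k : 'I_n, (M <= k)%N -> b ^+ k <= b ^+ M.
  move=> k kM; apply: ler_wiXn2l; [exact: ltW | exact: b1 | exact: kM].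
case: (boolP [forall k : 'I_n, (s k < M)%N == (k < M)%N]) => [/forallP HA | HB].
- pose u := fun i : nat => if (i < M)%N then 1 - r i else 0.
  pose v := fun i : nat => if (M <= i)%N then r i else 0.
  have E : \sum_(k < n) b ^+ k * r (s k) =
     \sum_(k < n) b ^+ k * (if (k < M)%N then 1 else 0)
     - \sum_(k < n) b ^+ k * u (s k) + \sum_(k < n) b ^+ k * v (s k).
    rewrite -sumrB -big_split /=; apply: eq_bigr => k _.
    have := eqP (HA k); rewrite /u /v.
    case: (ltnP k M) => kM Hs.
      by rewrite Hs leqNgt Hs /=; lra.
    by rewrite Hs leqNgt Hs /=; lra.
  have EH : \sum_(k < n) b ^+ k * (if (k < M)%N then 1 else 0) = \sum_(k < n | (k < M)%N) b ^+ k.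
    by rewrite [RHS]big_mkcond /=; apply: eq_bigr => k _; case: ifP; lra.
  have Eu : e * out <= \sum_(k < n) b ^+ k * u (s k).
    have -> : out = \sum_(k < n) u (s k).
      have Ru : \sum_(i < n) u i = \sum_(k < n) u (s k) by exact: (reindex_inj (@perm_inj _ s)).
      rewrite -Ru outE [LHS]big_mkcond /=.
      by apply: eq_bigr => i _; rewrite /u; case: ifP.
    rewrite mulr_sumr; apply: ler_sum => k _.
    rewrite /u; have := eqP (HA k); case: ifP => sk; last by lra.
    move=> /esym kM; apply: ler_wpM2r; [have := hr1 (s k); lra | exact: hbk].
  have Ev : \sum_(k < n) b ^+ k * v (s k) <= b ^+ M * inn.
    have -> : inn = \sum_(k < n) v (s k).
      have Rv : \sum_(i < n) v i = \sum_(k < n) v (s k) by exact: (reindex_inj (@perm_inj _ s)).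
      rewrite -Rv innE [LHS]big_mkcond /=.
      by apply: eq_bigr => i _; rewrite /v; case: ifP.
    rewrite mulr_sumr; apply: ler_sum => k _.
    rewrite /v; have := eqP (HA k); case: ifP => sk; last by lra.
    move=> kM; apply: ler_wpM2r; first exact: hr0.
    apply: hbk'; rewrite leqNgt; move: kM; rewrite ltnNge sk /= => <-; done.
  rewrite E EH.
  have h1 : b * e * inn <= e * out / 2.
    have : b * inn <= out / 2.
      have : b * inn <= b * (K * out) by apply: ler_wpM2l; [exact: ltW|].
      have : b * (K * out) <= out / 2.
        rewrite mulrA. have := ler_wpM2r hout0 bK. lra.
      lra.
    move=> h; have := ler_wpM2l he0 h; lra.
  have h2 : d * (out + inn) <= e * out / 2.
    have : d * (out + inn) <= d * (1 + K) * out.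
      have : d * inn <= d * (K * out) by apply: ler_wpM2l.
      lra.
    have : d * (1 + K) * out <= e / 2 * out.
      apply: ler_wpM2r => //; lra.
    lra.
  rewrite heM in Ev. lra.
- move: HB; rewrite negb_forall => /existsP [k1 Hk1].
  have [k0 /andP [k0M sk0]] : exists k0 : 'I_n, (k0 < M)%N && (M <= s k0)%N.
    case: (boolP [exists k0 : 'I_n, (k0 < M)%N && (M <= s k0)%N]) => [/existsP //|/existsPn Hno].
    exfalso.
    pose S := [set k : 'I_n | (k < M)%N].
    have sub : s @: S \subset S.
      apply/subsetP => x /imsetP [y yS ->]; rewrite inE.
      have := Hno y; rewrite inE in yS; rewrite yS /= -ltnNge; exact.
    have eqS : s @: S = S.
      apply/eqP; rewrite eqEcard sub /= card_imset //; exact: perm_inj.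
    move: Hk1; case: (ltnP k1 M) => k1M.
      have := Hno k1; rewrite k1M /= -ltnNge => ->; by [].
    case: ltnP => // sk1 _.
    have : s k1 \in s @: S by rewrite eqS inE.
    by rewrite mem_imset ?inE ?ltnNge ?k1M //; exact: perm_inj.
  have T1 : \sum_(k < n) b ^+ k * r (s k) <= \sum_(k < n) b ^+ k - c * b ^+ k0.
    rewrite (bigD1 k0) //= [X in _ <= X - _](bigD1 k0) //=.
    have : \sum_(k < n | k != k0) b ^+ k * r (s k) <= \sum_(k < n | k != k0) b ^+ k.
      apply: ler_sum => k _; rewrite -[X in _ <= X]mulr1.
      by apply: ler_wpM2l; [rewrite exprn_ge0 // ltW | exact: hr1].
    have : b ^+ k0 * r (s k0) <= b ^+ k0 * (1 - c).
      by apply: ler_wpM2l; [rewrite exprn_ge0 // ltW | exact: hrM].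
    lra.
  have T2 : \sum_(k < n) b ^+ k = \sum_(k < n | (k < M)%N) b ^+ k + \sum_(k < n | (M <= k)%N) b ^+ k.
    rewrite (bigID (fun k : 'I_n => (k < M)%N)) /=; congr (_ + _).
    by apply: eq_bigl => k; rewrite -leqNgt.
  have T3 : \sum_(k < n | (M <= k)%N) b ^+ k <= n%:R * (b * e).
    rewrite -heM.
    apply: le_trans (_ : \sum_(k < n | (M <= k)%N) b ^+ M <= _).
      by apply: ler_sum => k kM; apply: hbk'.
    have bM0 : 0 <= b ^+ M by rewrite exprn_ge0 // ltW.
    have -> : \sum_(k < n | (M <= k)%N) b ^+ M = (\sum_(k < n | (M <= k)%N) (1:R)) * b ^+ M.
      by rewrite mulr_suml; apply: eq_bigr => k _; rewrite mul1r.
    apply: ler_wpM2r => //; apply: sum_le_n => k _; lra.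
  have T4 : c * e <= c * b ^+ k0 by apply: ler_wpM2l => //; apply: hbk.
  have T5 : n%:R * (b * e) <= c / 2 * e.
    rewrite mulrA; apply: ler_wpM2r => //.
  have T6 : d * (out + inn) <= c / 2 * e.
    have : d * (out + inn) <= d * (1 + K) * out.
      have : d * inn <= d * (K * out) by apply: ler_wpM2l.
      lra.
    have : d * (1 + K) * out <= d * (1 + K) * n%:R.
      apply: ler_wpM2l => //; apply: mulr_ge0 => //; lra.
    have : b ^+ n.-1 * c / 2 <= c / 2 * e.
      have c2 : 0 <= c / 2 by lra.
      have := ler_wpM2r c2 hen. lra.
    lra.
  lra.
Qed.
Lemma sum_ind_mul (R : realFieldType) (F : nat -> R) (i N : nat) :
  \sum_(j < N) (if (j : nat) == i then 1 else 0) * F j = if (i < N)%N then F i else 0.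
Proof.
elim: N => [|N IH]; first by rewrite big_ord0 ltn0.
rewrite big_ord_recr /= IH.
case: (ltngtP i N) => [iN|Ni|<-].
- by rewrite (leqW iN) mul0r addr0.
- by rewrite ltnNge Ni mul0r addr0.
- by rewrite ltnSn mul1r add0r.
Qed.

Lemma sum_ind (R : realFieldType) (i N : nat) :
  \sum_(j < N) (if (j : nat) == i then 1 else 0) = (if (i < N)%N then 1 else 0 : R).
Proof.
have := sum_ind_mul (fun _ => (1:R)) i N.
by under eq_bigr do rewrite mulr1.
Qed.

Lemma sorted_core (R : realFieldType) (n' : nat) (A : nat -> nat -> R) (y : nat -> R)
  (c K b d : R) (s : {perm 'I_n'.+1}) (i : nat) :
 (forall i j, (i <= j)%N -> (j < n'.+1)%N -> y j <= y i) ->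
 (forall i j, (i < n'.+1)%N -> (j < n'.+1)%N -> 0 <= A i j) ->
 (forall i, (i < n'.+1)%N -> \sum_(j < n'.+1) A i j = 1) ->
 (forall i, (i < n'.+1)%N -> c <= A i i) ->
 (forall i j, (i < n'.+1)%N -> (j < n'.+1)%N -> A i j <= K * A j i) ->
 0 <= c -> 0 <= K -> 0 < b -> b <= 1 -> b * K <= 1/2 -> n'.+1%:R * b <= c/2 ->
 0 <= d -> d * (1 + K) * n'.+1%:R <= b ^+ n' * c / 2 -> d * (1+K) <= b ^+ n' / 2 ->
 (i < n'.+1)%N ->
 \sum_(k < n'.+1) b ^+ k * (\sum_(j < n'.+1) A (s k) j * y j)
   + d * `|\sum_(j < n'.+1) A i j * y j - y i|
 <= \sum_(k < n'.+1) b ^+ k * y k.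
Proof.
move=> ys A0 A1 Ac AK c0 K0 b0 b1 bK nb d0 dn dK iN.
set n := n'.+1.
pose cc := fun j : nat => \sum_(k < n) b ^+ k * A (s k) j.
pose dm := fun m : nat => y m - y m.+1.
have dm0 : forall m : 'I_n', 0 <= dm m.
  move=> m; rewrite /dm subr_ge0; apply: ys => //; exact: ltn_ord.
pose Fl := fun m : nat =>
  \sum_(i < n | (i < m.+1)%N) \sum_(j < n | (m.+1 <= j)%N) A i j
  + \sum_(i < n | (m.+1 <= i)%N) \sum_(j < n | (j < m.+1)%N) A i j.
have widen : forall (F : nat -> R) (m : 'I_n'), \sum_(j < m.+1) F j = \sum_(j < n | (j < m.+1)%N) F j.
  by move=> F m; apply: big_ord_widen; rewrite /n ltnS; exact: ltnW.
have L1 : \sum_(k < n) b ^+ k * (\sum_(j < n) A (s k) j * y j) = \sum_(j < n) cc j * y j.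
  rewrite /cc.
  under eq_bigr do rewrite mulr_sumr.
  rewrite exchange_big /=; apply: eq_bigr => j _; rewrite mulr_suml.
  by apply: eq_bigr => k _; rewrite mulrA.
have Scc : \sum_(j < n) cc j = \sum_(k < n) b ^+ k.
  rewrite /cc exchange_big /=; apply: eq_bigr => k _.
  by rewrite -mulr_sumr A1 ?mulr1 //; exact: ltn_ord.
have key : forall m : 'I_n', \sum_(j < m.+1) cc j + d * Fl m <= \sum_(j < m.+1) b ^+ j.
  move=> m; rewrite widen widen.
  have -> : \sum_(j < n | (j < m.+1)%N) cc j = \sum_(k < n) b ^+ k * (\sum_(j < n | (j < m.+1)%N) A (s k) j).
    rewrite /cc exchange_big /=; apply: eq_bigr => k _; by rewrite mulr_sumr.
  apply: (cut_lemma (c:=c) (K:=K) (b:=b) (d:=d)) => //.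
  by rewrite /n ltnS.
have flow : `|\sum_(j < n) A i j * y j - y i| <= \sum_(m < n') dm m * Fl m.
  have E1 := abel (fun j => A i j) y n'.
  have E2 := abel (fun j : nat => if j == i then 1 else 0) y n'.
  rewrite sum_ind_mul iN in E2.
  have S1 : \sum_(j < n'.+1) (if (j:nat) == i then 1 else 0) = 1 :> R.
    by rewrite sum_ind iN.
  rewrite S1 mul1r in E2.
  rewrite A1 // in E1.
  rewrite /n E1 E2 /= mul1r.
  have -> : forall a u v : R, a + u - (a + v) = u - v by move=> *; lra.
  rewrite -sumrB.
  apply: le_trans (ler_norm_sum _ _ _) _.
  apply: ler_sum => m _.
  rewrite -mulrBr normrM ger0_norm ?dm0 //.
  apply: ler_wpM2l; first exact: dm0.
  rewrite sum_ind widen.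
  have hcomp : \sum_(j < n | (j < m.+1)%N) A i j + \sum_(j < n | (m.+1 <= j)%N) A i j = 1.
    rewrite -(A1 i iN) [RHS](bigID (fun j : 'I_n => (j < m.+1)%N)) /=.
    by congr (_ + _); apply: eq_bigl => j; rewrite -leqNgt.
  have h0 : 0 <= \sum_(j < n | (j < m.+1)%N) A i j by apply: sumr_ge0 => j _; apply: A0.
  have h0' : 0 <= \sum_(j < n | (m.+1 <= j)%N) A i j by apply: sumr_ge0 => j _; apply: A0.
  have hO : 0 <= \sum_(i < n | (i < m.+1)%N) \sum_(j < n | (m.+1 <= j)%N) A i j.
    by apply: sumr_ge0 => i' _; apply: sumr_ge0 => j _; apply: A0.
  have hI : 0 <= \sum_(i < n | (m.+1 <= i)%N) \sum_(j < n | (j < m.+1)%N) A i j.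
    by apply: sumr_ge0 => i' _; apply: sumr_ge0 => j _; apply: A0.
  rewrite /Fl; case: ifP => im.
  - have : \sum_(j < n | (m.+1 <= j)%N) A i j <= \sum_(i < n | (i < m.+1)%N) \sum_(j < n | (m.+1 <= j)%N) A i j.
      rewrite [X in _ <= X](bigD1 (Ordinal iN)) /=; last by rewrite im.
      have : 0 <= \sum_(i0 < n | (i0 < m.+1)%N && (i0 != Ordinal iN)) \sum_(j < n | (m.+1 <= j)%N) A i0 j.
        by apply: sumr_ge0 => i' _; apply: sumr_ge0 => j _; apply: A0.
      lra.
    rewrite ler_norml; lra.
  - have : \sum_(j < n | (j < m.+1)%N) A i j <= \sum_(i < n | (m.+1 <= i)%N) \sum_(j < n | (j < m.+1)%N) A i j.
      rewrite [X in _ <= X](bigD1 (Ordinal iN)) /=; last by rewrite ltnNge -ltnS im.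
      have : 0 <= \sum_(i0 < n | (m.+1 <= i0)%N && (i0 != Ordinal iN)) \sum_(j < n | (j < m.+1)%N) A i0 j.
        by apply: sumr_ge0 => i' _; apply: sumr_ge0 => j _; apply: A0.
      lra.
    rewrite subr0 ler_norml; lra.
have E3 := abel cc y n'.
have E4 := abel (fun k => b ^+ k) y n'.
rewrite L1 /n E3 E4 /= Scc.
have : d * \sum_(m < n') dm m * Fl m <= \sum_(m < n') dm m * \sum_(j < m.+1) b ^+ j - \sum_(m < n') dm m * \sum_(j < m.+1) cc j.
  rewrite -sumrB mulr_sumr; apply: ler_sum => m _.
  rewrite -mulrBr mulrCA; apply: ler_wpM2l; first exact: dm0.
  have := key m; lra.
have := ler_wpM2l d0 flow.
lra.
Qed.
Lemma exists_sort (R : realFieldType) (n : nat) (y : nat -> R) :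
  exists s : {perm 'I_n}, forall i j : 'I_n, (i <= j)%N -> y (s j) <= y (s i).
Proof.
pose leT := fun a b : 'I_n => y b <= y a.
have tr : transitive leT by move=> a b c' h1 h2; rewrite /leT; exact: le_trans h2 h1.
have to : total leT by move=> a b; exact: le_total.
have pe : perm_eq (sort leT (enum 'I_n)) (ord_tuple n).
  by rewrite val_ord_tuple perm_sort perm_refl.
case/tuple_permP: pe => p Hp; exists p => i j ij.
have st := sort_sorted to (enum 'I_n).
have sz : size (sort leT (enum 'I_n)) = n by rewrite size_sort size_enum_ord.
have E : forall k : 'I_n, nth i (sort leT (enum 'I_n)) k = p k.
  by move=> k; rewrite Hp -(tnth_nth i) tnth_mktuple tnth_ord_tuple.
case: (eqVneq i j) => [->|ne]; first exact: lexx.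
have lt : (i < j)%N by rewrite ltn_neqAle ne ij.
have := sorted_ltn_nth tr i st; rewrite /prop_in2 => H.
have := H i j; rewrite !inE sz !ltn_ord E E; move=> /(_ isT isT lt); done.
Qed.
Lemma step_ineq (R : realFieldType) (n' : nat) (A : nat -> nat -> R) (y : nat -> R)
  (c K b d : R) (tau sig : {perm 'I_n'.+1}) (i : nat) :
 (forall i j : 'I_n'.+1, (i <= j)%N -> y (tau j) <= y (tau i)) ->
 (forall i j, (i < n'.+1)%N -> (j < n'.+1)%N -> 0 <= A i j) ->
 (forall i, (i < n'.+1)%N -> \sum_(j < n'.+1) A i j = 1) ->
 (forall i, (i < n'.+1)%N -> c <= A i i) ->
 (forall i j, (i < n'.+1)%N -> (j < n'.+1)%N -> A i j <= K * A j i) ->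
 0 <= c -> 0 <= K -> 0 < b -> b <= 1 -> b * K <= 1/2 -> n'.+1%:R * b <= c/2 ->
 0 <= d -> d * (1 + K) * n'.+1%:R <= b ^+ n' * c / 2 -> d * (1+K) <= b ^+ n' / 2 ->
 (i < n'.+1)%N ->
 \sum_(k < n'.+1) b ^+ k * (\sum_(j < n'.+1) A (sig k) j * y j)
   + d * `|\sum_(j < n'.+1) A i j * y j - y i|
 <= \sum_(k < n'.+1) b ^+ k * y (tau k).
Proof.
move=> ys A0 A1 Ac AK c0 K0 b0 b1 bK nb d0 dn dK iN.
pose t := fun k : nat => (tau (inord k) : nat).
have tE : forall k : 'I_n'.+1, t k = tau k by move=> k; rewrite /t inord_val.
pose A2 := fun k l => A (t k) (t l).
pose y2 := fun k => y (t k).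
have rei : forall F : nat -> R, \sum_(j < n'.+1) F (t j) = \sum_(j < n'.+1) F j.
  move=> F; rewrite (eq_bigr (fun j : 'I_n'.+1 => F (tau j))); last by move=> j _; rewrite tE.
  by rewrite [RHS](reindex_inj (@perm_inj _ tau)).
have tlt : forall k, (t k < n'.+1)%N by move=> k; exact: ltn_ord.
have H := @sorted_core R n' A2 y2 c K b d (sig * tau^-1)%g ((tau^-1)%g (Ordinal iN)).
have ys2 : forall i j, (i <= j)%N -> (j < n'.+1)%N -> y2 j <= y2 i.
  move=> i0 j0 ij jn; rewrite /y2 /t; apply: ys.
  by rewrite !inordK // (leq_ltn_trans ij jn).
have := H ys2.
have A02 : forall i j, (i < n'.+1)%N -> (j < n'.+1)%N -> 0 <= A2 i j by move=> *; apply: A0.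
have A12 : forall i, (i < n'.+1)%N -> \sum_(j < n'.+1) A2 i j = 1.
  by move=> i0 _; rewrite /A2 (rei (fun j => A (t i0) j)) A1.
have Ac2 : forall i, (i < n'.+1)%N -> c <= A2 i i by move=> *; apply: Ac.
have AK2 : forall i j, (i < n'.+1)%N -> (j < n'.+1)%N -> A2 i j <= K * A2 j i by move=> *; apply: AK.
move=> /(_ A02 A12 Ac2 AK2 c0 K0 b0 b1 bK nb d0 dn dK (ltn_ord _)).
have e1 : forall k : 'I_n'.+1, \sum_(j < n'.+1) A2 ((sig * tau^-1)%g k) j * y2 j = \sum_(j < n'.+1) A (sig k) j * y j.
  move=> k; rewrite /A2 /y2 (rei (fun j => A (t ((sig * tau^-1)%g k)) j * y j)).
  by rewrite tE permM permKV.
have e2 : \sum_(j < n'.+1) A2 ((tau^-1)%g (Ordinal iN)) j * y2 j - y2 ((tau^-1)%g (Ordinal iN))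
         = \sum_(j < n'.+1) A i j * y j - y i.
  rewrite /A2 /y2 (rei (fun j => A (t ((tau^-1)%g (Ordinal iN))) j * y j)).
  by rewrite tE permKV.
have e3 : \sum_(k < n'.+1) b ^+ k * (\sum_(j < n'.+1) A2 ((sig * tau^-1)%g k) j * y2 j)
   = \sum_(k < n'.+1) b ^+ k * (\sum_(j < n'.+1) A (sig k) j * y j).
  by apply: eq_bigr => k _; rewrite e1.
have e4 : \sum_(k < n'.+1) b ^+ k * y2 k = \sum_(k < n'.+1) b ^+ k * y (tau k).
  by apply: eq_bigr => k _; rewrite /y2 tE.
by rewrite -e3 -e4 -e2.
Qed.
Lemma params (R : realFieldType) (n' : nat) (c K : R) :
  0 < c -> c <= 1 -> 1 <= K ->
  exists b d : R, [/\ 0 < b, b <= 1, b * K <= 1/2, n'.+1%:R * b <= c/2 &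
     [/\ 0 < d, d * (1 + K) * n'.+1%:R <= b ^+ n' * c / 2 & d * (1+K) <= b ^+ n' / 2]].
Proof.
move=> c0 c1 K1.
set N : R := n'.+1%:R.
have N1 : 1 <= N by rewrite /N ler1n.
have hN : 0 <= N - 1 by lra.
have hK : 0 <= K - 1 by lra.
have hK0 : 0 <= K by lra.
have hc : 0 <= 1 - c by lra.
have X0 : 0 < 2 * N * K by apply: mulr_gt0; [apply: mulr_gt0|]; lra.
pose b := c / (2 * N * K).
have bX : b * (2 * N * K) = c by rewrite /b divfK // gt_eqF.
have b0 : 0 < b by apply: divr_gt0.
have h1 := mulr_ge0 (mulr_ge0 (ltW b0) hK0) hN.
have bK : b * K <= 1/2 by lra.
have h2 := mulr_ge0 (mulr_ge0 (le_trans ler01 N1 : 0 <= N) (ltW b0)) hK.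
have nb : N * b <= c / 2 by lra.
have h3 := mulr_ge0 (ltW b0) hK.
have b1 : b <= 1 by lra.
have bn0 : 0 < b ^+ n' by apply: exprn_gt0.
have Y0 : 0 < 2 * N * (1 + K) by apply: mulr_gt0; [apply: mulr_gt0|]; lra.
pose d := b ^+ n' * c / (2 * N * (1 + K)).
have dY : d * (2 * N * (1 + K)) = b ^+ n' * c by rewrite /d divfK // gt_eqF.
have d0 : 0 < d by apply: divr_gt0 => //; apply: mulr_gt0.
exists b, d; split => //; split => //.
- lra.
- have h4 := mulr_ge0 (ltW bn0) hc.
  have h5 := mulr_ge0 (mulr_ge0 (ltW d0) hK0 ) hN.
  have h6 := mulr_ge0 (ltW d0) hN.
  lra.
Qed.
Lemma consensus (R : realFieldType) (n' : nat) (c K : R)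
  (A : nat -> nat -> nat -> R) (Y : nat -> nat -> R) :
  0 < c -> c <= 1 -> 1 <= K ->
  (forall t i j, (i < n'.+1)%N -> (j < n'.+1)%N -> 0 <= A t i j) ->
  (forall t i, (i < n'.+1)%N -> \sum_(j < n'.+1) A t i j = 1) ->
  (forall t i, (i < n'.+1)%N -> c <= A t i i) ->
  (forall t i j, (i < n'.+1)%N -> (j < n'.+1)%N -> A t i j <= K * A t j i) ->
  (forall t i, (i < n'.+1)%N -> Y t.+1 i = \sum_(j < n'.+1) A t i j * Y t j) ->
  exists B : R, forall i, (i < n'.+1)%N -> forall T,
     \sum_(t < T) `|Y t.+1 i - Y t i| <= B.
Proof.
move=> c0 c1 K1 A0 A1 Ac AK HY.
have [b [d [[b0 b1 bK nb] [d0 dn dK]]]] := params n' c0 c1 K1.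
pose P := fun t (s : {perm 'I_n'.+1}) =>
  [forall i : 'I_n'.+1, forall j : 'I_n'.+1, (i <= j)%N ==> (Y t (s j) <= Y t (s i))].
pose tau := fun t => odflt 1%g [pick s | P t s].
have tauP : forall t (i j : 'I_n'.+1), (i <= j)%N -> Y t (tau t j) <= Y t (tau t i).
  move=> t; rewrite /tau; case: pickP => [s Ps|none] /=.
    by move=> i j ij; move/forallP: Ps => /(_ i) /forallP /(_ j) /implyP; apply.
  exfalso; have [s Hs] := exists_sort n'.+1 (Y t).
  move: (none s); rewrite /P.
  have -> : [forall i : 'I_n'.+1, forall j : 'I_n'.+1, (i <= j)%N ==> (Y t (s j) <= Y t (s i))] = true.
    apply/forallP => i; apply/forallP => j; apply/implyP; exact: Hs.
  by [].
pose Phi := fun t => \sum_(k < n'.+1) b ^+ k * Y t (tau t k).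
have step : forall t i, (i < n'.+1)%N -> Phi t.+1 + d * `|Y t.+1 i - Y t i| <= Phi t.
  move=> t i iN.
  have K0 : 0 <= K by lra.
  have := @step_ineq R n' (A t) (Y t) c K b d (tau t) (tau t.+1) i (tauP t) (A0 t) (A1 t) (Ac t) (AK t)
     (ltW c0) K0 b0 b1 bK nb (ltW d0) dn dK iN.
  rewrite -HY //.
  have -> : \sum_(k < n'.+1) b ^+ k * (\sum_(j < n'.+1) A t (tau t.+1 k) j * Y t j) = Phi t.+1.
    by apply: eq_bigr => k _; rewrite HY.
  by [].
pose lo := - \sum_(j < n'.+1) `|Y 0%N j|.
have lo0 : forall j, (j < n'.+1)%N -> lo <= Y 0%N j.
  move=> j jn; rewrite /lo.
  have : `|Y 0%N j| <= \sum_(k < n'.+1) `|Y 0%N k|.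
    rewrite (bigD1 (Ordinal jn)) //=.
    have : 0 <= \sum_(k < n'.+1 | k != Ordinal jn) `|Y 0%N k| by apply: sumr_ge0.
    lra.
  have := ler_normr (Y 0%N j) (- Y 0%N j). 
  have := ler_norm (- Y 0%N j); rewrite normrN. lra.
have loT : forall t j, (j < n'.+1)%N -> lo <= Y t j.
  elim=> [|t IH] j jn; first exact: lo0.
  rewrite HY //.
  have -> : lo = \sum_(k < n'.+1) A t j k * lo by rewrite -mulr_suml A1 // mul1r.
  apply: ler_sum => k _; apply: ler_wpM2l; first exact: A0.
  exact: IH.
pose Sb := \sum_(k < n'.+1) b ^+ k.
have PhiT : forall t, lo * Sb <= Phi t.
  move=> t; rewrite /Sb mulr_sumr; apply: ler_sum => k _.
  rewrite mulrC; apply: ler_wpM2l; first by rewrite exprn_ge0 // ltW.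
  apply: loT; exact: ltn_ord.
exists ((Phi 0%N - lo * Sb) / d) => i iN T.
rewrite ler_pdivlMr //.
have tele : forall T, (\sum_(t < T) `|Y t.+1 i - Y t i|) * d <= Phi 0%N - Phi T.
  elim=> [|T' IH]; first by rewrite big_ord0 mul0r subrr.
  rewrite big_ord_recr /= mulrDl.
  have := step T' i iN. lra.
have := tele T; have := PhiT T; lra.
Qed.
Lemma sumN_big (n : nat) (g : nat -> R) : sumN n g = \sum_(j < n) g j.
Proof. elim: n => [|n IH] /=; first by rewrite big_ord0. by rewrite big_ord_recr /= IH. Qed.

Lemma div_le (a b c d : R) : 0 < b -> 0 < d -> a * d <= c * b -> a / b <= c / d.
Proof. move=> b0 d0 h; rewrite ler_pdivrMr // mulrAC ler_pdivlMr //. Qed.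

Lemma coord_conv (p N : nat) (x : nat -> vec) (w : nat -> R) (f : vec -> R) (k0 : nat) :
  (1 <= N)%coq_nat -> (forall i, (i < N)%coq_nat -> Rlt 0 (w i)) -> PDD p f ->
  forall i, (i < N)%coq_nat -> exists l, Un_cv (fun t => bms N f w x t i k0) l.
Proof.
move=> HN Hw Hf.
have [F01 [Fself Fsym]] := PDD_facts _ _ Hf.
have F0 : forall u, 0 <= f u by move=> u; apply/RleP; case: (F01 u).
have F1 : forall u, f u <= 1 by move=> u; apply/RleP; case: (F01 u).
have [lo [lo0 Hlo]] := weights_lo _ _ Hw.
have {}lo0 : 0 < lo by apply/RltP.
have w0 : forall i, (i < N)%N -> 0 < w i by move=> i /ssrnat.ltP iN; apply/RltP; apply: Hw.
have wlo : forall i, (i < N)%N -> lo <= w i by move=> i /ssrnat.ltP iN; apply/RleP; apply: Hlo.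
clear Hlo; case: N HN Hw w0 wlo => [/ssrnat.ltP //|n'] _ Hw w0 wlo.
pose W := \sum_(j < n'.+1) w j.
have wW : forall i, (i < n'.+1)%N -> w i <= W.
  move=> i iN; rewrite /W (bigD1 (Ordinal iN)) //=.
  have : 0 <= \sum_(j < n'.+1 | j != Ordinal iN) w j by apply: sumr_ge0 => j _; apply/ltW/w0.
  lra.
have loW : lo <= W by apply: le_trans (wlo 0%N _) (wW 0%N _).
have W0 : 0 < W by apply: lt_le_trans loW.
pose X := bms n'.+1 f w x.
pose D := fun t i => \sum_(j < n'.+1) f (vsub (X t i) (X t j)) * w j.
have Dlo : forall t i, (i < n'.+1)%N -> w i <= D t i.
  move=> t i iN; rewrite /D (bigD1 (Ordinal iN)) //= Fself mul1r.
  have : 0 <= \sum_(j < n'.+1 | j != Ordinal iN) f (vsub (X t i) (X t j)) * w j.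
    by apply: sumr_ge0 => j _; apply: mulr_ge0 => //; apply/ltW/w0.
  lra.
have DW : forall t i, D t i <= W.
  move=> t i; rewrite /D /W; apply: ler_sum => j _.
  rewrite -[X in _ <= X]mul1r; apply: ler_wpM2r => //; exact/ltW/w0.
have D0 : forall t i, (i < n'.+1)%N -> 0 < D t i.
  by move=> t i iN; apply: lt_le_trans (w0 i iN) (Dlo t i iN).
pose A := fun t i j => f (vsub (X t i) (X t j)) * w j / D t i.
pose Y := fun t i => X t i k0.
have c0 : 0 < lo / W by apply: divr_gt0.
have c1 : lo / W <= 1 by rewrite ler_pdivrMr // mul1r.
have K1 : 1 <= W * W / (lo * lo).
  rewrite ler_pdivlMr ?mulr_gt0 // mul1r; apply: ler_pM => //; exact: ltW.
have A0 : forall t i j, (i < n'.+1)%N -> (j < n'.+1)%N -> 0 <= A t i j.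
  move=> t i j iN jN; apply: divr_ge0; first by apply: mulr_ge0 => //; apply/ltW/w0.
  exact/ltW/D0.
have A1 : forall t i, (i < n'.+1)%N -> \sum_(j < n'.+1) A t i j = 1.
  by move=> t i iN; rewrite /A -mulr_suml divff // gt_eqF // D0.
have Ac : forall t i, (i < n'.+1)%N -> lo / W <= A t i i.
  move=> t i iN; rewrite /A Fself mul1r; apply: div_le => //; first exact: D0.
  apply: ler_pM; [exact: ltW | exact/ltW/D0 | exact: wlo | exact: DW].
have AK : forall t i j, (i < n'.+1)%N -> (j < n'.+1)%N -> A t i j <= (W * W / (lo * lo)) * A t j i.
  move=> t i j iN jN; rewrite /A (Fsym (X t j)).
  set phi := f (vsub (X t i) (X t j)).
  have phi0 : 0 <= phi by apply: F0.
  have h1 : phi * w j / D t i <= phi * W / lo.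
    apply: div_le => //; first exact: D0.
    apply: ler_pM.
    - apply: mulr_ge0 => //; exact/ltW/w0.
    - exact: ltW.
    - apply: ler_wpM2l => //; exact: wW.
    - apply: le_trans (wlo i iN) (Dlo t i iN).
  have h2 : phi * lo / W <= phi * w i / D t j.
    apply: div_le => //; first exact: D0.
    apply: ler_pM.
    - apply: mulr_ge0 => //; exact: ltW.
    - exact/ltW/D0.
    - apply: ler_wpM2l => //; exact: wlo.
    - exact: DW.
  have h3 : W * W / (lo * lo) * (phi * lo / W) = phi * W / lo.
    by field; rewrite !gt_eqF.
  apply: le_trans h1 _; rewrite -h3; apply: ler_wpM2l => //.
  exact: le_trans ler01 K1.
have HY : forall t i, (i < n'.+1)%N -> Y t.+1 i = \sum_(j < n'.+1) A t i j * Y t j.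
  move=> t i iN; rewrite /Y /A /=.
  have -> : X t.+1 i k0 = sumN n'.+1 (fun j => f (vsub (X t i) (X t j)) * w j * X t j k0)
     / sumN n'.+1 (fun j => f (vsub (X t i) (X t j)) * w j) by [].
  rewrite !sumN_big -/(D t i).
  rewrite mulr_suml; apply: eq_bigr => j _; by rewrite mulrAC.
have [B HB] := consensus c0 c1 K1 A0 A1 Ac AK HY.
move=> i /ssrnat.ltP iN.
apply: (bv_conv _ B) => T.
rewrite sumN_big; apply/RleP; exact: HB.
Qed.

Unset Implicit Arguments.
Open Scope R_scope.

Theorem theorem1 (p N : nat) (x : nat -> vec) (w : nat -> R) (f : vec -> R) :
  (1 <= p)%coq_nat -> (1 <= N)%coq_nat ->
  (forall i, (i < N)%coq_nat -> 0 < w i) ->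
  PDD p f ->
  exists xstar : nat -> vec,
    forall i, (i < N)%coq_nat ->
      forall eps, 0 < eps ->
        exists T : nat, forall t, (T <= t)%coq_nat ->
          norm p (vsub (bms N f w x t i) (xstar i)) < eps.
Proof.
  intros Hp HN Hw Hf.
  apply final_from_coord; [exact Hp|].
  intros i k Hi. exact (@coord_conv p N x w f k HN Hw Hf i Hi).
Qed.
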